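(* Let $G=(V,E)$ be a graph with $n=|V|$. For all $i\in[0,n-1]$, all $v\in V$ and all $w\in D_{i,v}\setminus D_{i+1,v}$, we have $p_v([w]_v)=i$.
   Context: Graphs are finite, simple, undirected, with nonempty vertex set. A module of $G=(V,E)$ is a nonempty $M\subseteq V$ such that every $u\in V\setminus M$ is adjacent either to all or to none of the vertices of $M$. For $|V|>1$ and $v\in V$, $D_G(v)$ is: the connected component of $G$ containing $v$ if $G$ is disconnected; otherwise the connected component of $\overline{G}$ containing $v$ if $\overline{G}$ is disconnected; otherwise (both connected, in which case the maximal proper modules of $G$ partition $V$) the maximal proper module of $G$ containing $v$; if $|V|=1$, $D_G(v)=\{v\}$. Define $D_{0,v}=V$ and $D_{i+1,v}=D_{G[D_{i,v}]}(v)$ for $i\in[0,n-1]$. For $v,w\in V$, $M_{v,w}$ is the intersection of all modules of $G$ containing $v$ and $w$. Define $w_1\prec_v w_2$ iff $M_{v,w_2}\subsetneq M_{v,w_1}$; $\prec_v$ is a strict weak order, so incomparability $\sim_v$ w.r.t. $\prec_v$ is an equivalence relation on $V$ with classes $[w]_v$, and $\prec_v$ induces a strict linear order on $V/{\sim_v}$ (with $[z]_v\prec_v[w]_v$ iff $z\prec_v w$). $p_v\colon V/{\sim_v}\to\mathbb{N}$ assigns to each class its position in this strict linear order, the smallest class receiving $0$. *)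

(* Defs.v *)
(* A graph is a symmetric irreflexive relation e on a finType T;
   its vertex set V is [set: T] (nonempty as soon as a vertex is given). *)
From mathcomp Require Import all_boot.
Set Implicit Arguments. Unset Strict Implicit. Unset Printing Implicit Defensive.

Section ModDecomp.
Variables (T : finType) (e : rel T).

Definition induced (S : {set T}) : rel T :=
  fun a b => [&& a \in S, b \in S & e a b].

Definition co_induced (S : {set T}) : rel T :=
  fun a b => [&& a \in S, b \in S, a != b & ~~ e a b].

Definition connected_on (S : {set T}) (r : rel T) : bool :=
  [forall x in S, forall y in S, connect r x y].

Definition component (S : {set T}) (r : rel T) (v : T) : {set T} :=
  [set x in S | connect r v x].

Definition is_module (S M : {set T}) : bool :=
  [&& M != set0, M \subset S &
      [forall u in S :\: M, [forall m in M, e u m] || [forall m in M, ~~ e u m]]].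

Definition max_proper_module (S M : {set T}) : bool :=
  [&& is_module S M, M != S &
      [forall M' : {set T}, (is_module S M' && (M' != S) && (M \subset M')) ==> (M' == M)]].

Definition Dfun (S : {set T}) (v : T) : {set T} :=
  if #|S| == 1 then [set v]
  else if ~~ connected_on S (induced S) then component S (induced S) v
  else if ~~ connected_on S (co_induced S) then component S (co_induced S) v
  else match [pick M | max_proper_module S M && (v \in M)] with
       | Some M => M
       | None => S (* unreachable: the maximal proper modules partition S *)
       end.

Fixpoint Dseq (v : T) (i : nat) : {set T} :=
  match i with
  | 0 => [set: T]
  | i'.+1 => Dfun (Dseq v i') v
  end.

Definition Mvw (v w : T) : {set T} :=
  \bigcap_(M : {set T} | is_module [set: T] M && (v \in M) && (w \in M)) M.

Definition precv (v w1 w2 : T) : bool := Mvw v w2 \proper Mvw v w1.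

Definition vclass (v w : T) : {set T} :=
  [set y | ~~ precv v y w && ~~ precv v w y].

(* p_v([w]_v): position of [w]_v in the linear order on classes,
   i.e. the number of classes strictly below [w]_v *)
Definition pv (v w : T) : nat :=
  #|[set vclass v z | z in [set z | precv v z w]]|.

End ModDecomp.

(* Main.v *)
Require Import Defs.
From mathcomp Require Import all_boot.
Set Implicit Arguments. Unset Strict Implicit. Unset Printing Implicit Defensive.

Definition good (T : finType) (e : rel T) (S P : {set T}) (v : T) : Prop :=
  [/\ is_module e S P, v \in P, P \subset S,
   (forall N w, is_module e S N -> v \in N -> w \in N -> w \in S -> w \notin P -> P \subset N) &
   (forall w z, w \in S -> w \notin P -> z \in S -> z \notin P -> exists K, [/\ is_module e S K, v \in K, z \in K &
      forall N, is_module e S N -> v \in N -> w \in N -> w \in K -> z \in N])].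

Section Gen.
Variables (T : finType) (e : rel T).
Hypothesis e_sym : symmetric e.

Lemma is_moduleP (S M : {set T}) : reflect [/\ M != set0, M \subset S & forall u, u \in S -> u \notin M ->
   (forall m, m \in M -> e u m) \/ (forall m, m \in M -> ~~ e u m)] (is_module e S M).
Proof.
rewrite /is_module; apply: (iffP and3P) => [[M0 MS /forallP H]|[M0 MS H]]; split=> //.
  move=> u uS uM; have := H u; rewrite !inE uS uM /= => /orP [/forallP A|/forallP A];
    [left|right] => m mM; by have := A m; rewrite mM.
apply/forallP => u; apply/implyP; rewrite inE => /andP [uM uS].
case: (H u uS uM) => A; apply/orP; [left|right]; apply/forallP => m; apply/implyP => /A //.
Qed.

Lemma module_self (S : {set T}) : S != set0 -> is_module e S S.
Proof. move=> S0; apply/is_moduleP; split=> // u uS; by rewrite uS. Qed.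

Lemma module1 (S : {set T}) v : v \in S -> is_module e S [set v].
Proof.
move=> vS; apply/is_moduleP; split; first by apply/set0Pn; exists v; rewrite inE.
  by rewrite sub1set.
move=> u _ _; case: (boolP (e u v)) => h; [left|right] => m; rewrite inE => /eqP -> //.
Qed.

Lemma module_lift (A B : {set T}) : is_module e setT A -> is_module e A B -> is_module e setT B.
Proof.
move=> /is_moduleP [A0 _ HA] /is_moduleP [B0 BA HB]; apply/is_moduleP; split=> //.
move=> u _ uB; case: (boolP (u \in A)) => uA; first exact: HB.
case: (HA u (in_setT u) uA) => H; [left|right] => m mB; apply: H; exact: (subsetP BA).
Qed.

Lemma module_restr (S N A : {set T}) : is_module e S N -> A \subset S -> N :&: A != set0 ->
  is_module e A (N :&: A).
Proof.
move=> /is_moduleP [N0 NS HN] AS NA0; apply/is_moduleP; split=> //; first exact: subsetIr.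
move=> u uA; rewrite inE uA andbT => uN.
case: (HN u (subsetP AS u uA) uN) => H; [left|right] => m; rewrite inE => /andP [mN _]; exact: H.
Qed.

Lemma module_union (S N1 N2 : {set T}) : is_module e S N1 -> is_module e S N2 -> N1 :&: N2 != set0 ->
  is_module e S (N1 :|: N2).
Proof.
move=> /is_moduleP [N10 N1S H1] /is_moduleP [N20 N2S H2] /set0Pn [c]; rewrite inE => /andP [c1 c2].
apply/is_moduleP; split.
- by apply/set0Pn; exists c; rewrite inE c1.
- by rewrite subUset N1S.
move=> u uS; rewrite inE negb_or => /andP [u1 u2].
case: (boolP (e u c)) => uc.
  left => m; rewrite inE => /orP [m1|m2].
    by case: (H1 u uS u1) => H; [apply: H| have := H c c1; rewrite uc].
  by case: (H2 u uS u2) => H; [apply: H| have := H c c2; rewrite uc].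
right => m; rewrite inE => /orP [m1|m2].
  by case: (H1 u uS u1) => H; [have := H c c1; rewrite (negbTE uc)| apply: H].
by case: (H2 u uS u2) => H; [have := H c c2; rewrite (negbTE uc)| apply: H].
Qed.

Lemma connect_stay (r : rel T) (B : pred T) x y :
  (forall a b, a \in B -> r a b -> b \in B) -> x \in B -> connect r x y -> y \in B.
Proof.
move=> H xB /connectP [p pth ->] {y}; elim: p x xB pth => //= a p IH x xB /andP [xa pth].
exact: IH (H x a xB xa) pth.
Qed.

Lemma induced_sym (S : {set T}) : symmetric (induced e S).
Proof. by move=> a b; rewrite /induced e_sym; case: (a \in S); case: (b \in S). Qed.

Lemma co_induced_sym (S : {set T}) : symmetric (co_induced e S).
Proof. by move=> a b; rewrite /co_induced e_sym eq_sym; case: (a \in S); case: (b \in S). Qed.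

Lemma closed_module (S K : {set T}) : K != set0 -> K \subset S ->
  (forall m u, m \in K -> u \in S -> e m u -> u \in K) -> is_module e S K.
Proof.
move=> K0 KS H; apply/is_moduleP; split=> // u uS uK; right => m mK.
by apply/negP => emu; move: uK; rewrite (H m u mK uS) // -e_sym.
Qed.

Lemma comp_closed (S : {set T}) x m u : m \in component S (induced e S) x -> u \in S -> e m u ->
  u \in component S (induced e S) x.
Proof.
rewrite !inE => /andP [mS xm] uS emu; rewrite uS /=.
by apply: connect_trans xm (connect1 _); rewrite /induced mS uS emu.
Qed.

Lemma comp_module (S : {set T}) x : x \in S -> is_module e S (component S (induced e S) x).
Proof.
move=> xS; apply: closed_module.
- by apply/set0Pn; exists x; rewrite inE xS connect0.
- by apply/subsetP => y; rewrite inE => /andP [].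
- exact: comp_closed.
Qed.

Lemma comp2_module (S : {set T}) x z : x \in S ->
  is_module e S (component S (induced e S) x :|: component S (induced e S) z).
Proof.
move=> xS; apply: closed_module.
- by apply/set0Pn; exists x; rewrite !inE xS connect0.
- by apply/subsetP => y; rewrite !inE => /orP [] /andP [].
- move=> m u; rewrite inE => /orP [mK|mK] uS emu; rewrite inE (comp_closed mK) //; by rewrite orbT.
Qed.

Lemma comp_in_module (S N : {set T}) x y : is_module e S N -> x \in N -> y \in N -> y \in S ->
  ~~ connect (induced e S) x y -> component S (induced e S) x \subset N.
Proof.
move=> /is_moduleP [_ NS HN] xN yN yS nxy.
have key : forall b, connect (induced e S) x b -> (b \in N) && connect (induced e S) x b.
  move=> b; apply: (@connect_stay _ [pred b | (b \in N) && connect (induced e S) x b]); last by rewrite inE xN connect0.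
  move=> a c; rewrite !inE => /andP [aN xa] rac; have xc : connect (induced e S) x c by apply: connect_trans xa (connect1 rac).
  rewrite xc andbT; apply/negPn/negP => cN; move: rac; rewrite /induced => /and3P [aS cS eac].
  case: (HN c cS cN) => H.
    by move: nxy; rewrite (connect_trans xc (connect1 _)) // /induced cS yS H.
  by move: (H a aN); rewrite e_sym eac.
apply/subsetP => b; rewrite inE => /andP [_ /key /andP []] //.
Qed.

Lemma cover_disc (S N1 N2 : {set T}) : is_module e S N1 -> is_module e S N2 ->
  N1 != S -> N2 != S -> S \subset N1 :|: N2 ->
  ~~ connected_on S (induced e S) || ~~ connected_on S (co_induced e S).
Proof.
move=> /is_moduleP [_ N1S H1] /is_moduleP [_ N2S H2] N1ne N2ne SU.
have [a0 a0S a0N2] : exists2 a, a \in S & a \notin N2.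
  by apply/subsetPn; apply: contra N2ne => h; rewrite eqEsubset N2S.
have [b0 b0S b0N1] : exists2 b, b \in S & b \notin N1.
  by apply/subsetPn; apply: contra N1ne => h; rewrite eqEsubset N1S.
have a0N1 : a0 \in N1 by move: (subsetP SU a0 a0S); rewrite inE (negbTE a0N2) orbF.
have b0N2 : b0 \in N2 by move: (subsetP SU b0 b0S); rewrite inE (negbTE b0N1).
pose B := [pred b | (b \in S) && (b \notin N1)].
have noconn : forall r : rel T, (forall a b, a \in B -> r a b -> b \in B) -> ~~ connected_on S r.
  move=> r Hr; apply/negP => /forallP /(_ b0) /implyP /(_ b0S) /forallP /(_ a0) /implyP /(_ a0S) c.
  have := connect_stay Hr _ c; rewrite !inE b0S b0N1 a0N1 /= andbF; by move=> /(_ isT).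
case: (boolP (e a0 b0)) => eab.
  apply/orP; right; apply: noconn => a b; rewrite !inE => /andP [aS aN1] /and4P [_ bS anb neab].
  rewrite bS /=; apply/negP => bN1.
  case: (H1 a aS aN1) => H; first by move: neab; rewrite H.
  have aN2 : a \in N2 by move: (subsetP SU a aS); rewrite inE (negbTE aN1).
  case: (H2 a0 a0S a0N2) => H'; last by move: (H' b0 b0N2); rewrite eab.
  by move: (H a0 a0N1); rewrite e_sym H'.
apply/orP; left; apply: noconn => a b; rewrite !inE => /andP [aS aN1] /and3P [_ bS eab'].
rewrite bS /=; apply/negP => bN1.
case: (H1 a aS aN1) => H; last by move: (H b bN1); rewrite eab'.
have aN2 : a \in N2 by move: (subsetP SU a aS); rewrite inE (negbTE aN1).
case: (H2 a0 a0S a0N2) => H'; first by move: eab; rewrite H'.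
by move: (H' a aN2); rewrite e_sym H.
Qed.

Lemma good_comp (S : {set T}) v : v \in S -> good e S (component S (induced e S) v) v.
Proof.
move=> vS; split.
- exact: comp_module.
- by rewrite inE vS connect0.
- by apply/subsetP => y; rewrite inE => /andP [].
- move=> N w Nm vN wN wS wP; refine (comp_in_module Nm vN wN wS _).
  by move: wP; rewrite inE wS.
move=> w z wS wP zS zP; exists (component S (induced e S) v :|: component S (induced e S) z); split.
- exact: comp2_module.
- by rewrite !inE vS connect0.
- by rewrite !inE zS connect0 orbT.
move=> N Nm vN wN; rewrite inE (negbTE wP) /= inE wS /= => zw.
have sub : component S (induced e S) w \subset N.
  refine (comp_in_module Nm wN vN vS _).
  by move: wP; rewrite inE wS /= (sym_connect_sym (induced_sym S)).
by apply: (subsetP sub); rewrite inE zS /= (sym_connect_sym (induced_sym S)).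
Qed.

End Gen.

Definition ce (T : finType) (e : rel T) : rel T := fun a b => (a != b) && ~~ e a b.

Lemma ce_sym (T : finType) (e : rel T) : symmetric e -> symmetric (ce e).
Proof. by move=> es a b; rewrite /ce eq_sym es. Qed.

Lemma module_ce (T : finType) (e : rel T) (S M : {set T}) : is_module (ce e) S M = is_module e S M.
Proof.
apply/is_moduleP/is_moduleP => [][M0 MS H]; split=> // u uS uM; case: (H u uS uM) => H';
  [right|left|right|left] => m mM; have := H' m mM; rewrite /ce;
  (have -> : (u != m) by apply: contraNneq uM => ->); by rewrite ?negbK.
Qed.

Lemma co_ind (T : finType) (e : rel T) (S : {set T}) : co_induced e S =2 induced (ce e) S.
Proof. by move=> a b; rewrite /co_induced /induced /ce. Qed.

Lemma good_ce (T : finType) (e : rel T) S P v : good (ce e) S P v -> good e S P v.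
Proof.
case=> [H1 H2 H3 H4 H5]; split=> //; first by rewrite -module_ce.
  by move=> N w; rewrite -module_ce; apply: H4.
move=> w z wS wP zS zP; have [K [K1 K2 K3 K4]] := H5 w z wS wP zS zP.
exists K; split=> //; first by rewrite -module_ce.
by move=> N; rewrite -module_ce; apply: K4.
Qed.

Section Main.
Variables (T : finType) (e : rel T).
Hypothesis e_sym : symmetric e.

Lemma Dfun_good (S : {set T}) v : v \in S -> good e S (Dfun e S v) v.
Proof.
move=> vS; rewrite /Dfun.
case: ifP => [/cards1P [x Sx] | _].
  have xv : x = v by move: vS; rewrite Sx inE => /eqP.
  subst x; rewrite Sx; split.
  - by apply: module1; rewrite inE.
  - by rewrite inE.
  - by [].
  - by move=> N w _ _ _ ->.
  by move=> w z ->.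
case: ifP => [_ | /negbFE conn1]; first exact: good_comp.
case: ifP => [_ | /negbFE conn2].
  have -> : component S (co_induced e S) v = component S (induced (ce e) S) v.
    by apply/setP => x; rewrite !inE (eq_connect (co_ind e S)).
  apply: good_ce; apply: good_comp => //; exact: ce_sym.
have S0 : S != set0 by apply/set0Pn; exists v.
case: pickP => [M /andP [/and3P [Mm MneS /forallP Mmax] vM] | _].
  have MS : M \subset S by case/is_moduleP: Mm.
  have strong : forall N w, is_module e S N -> v \in N -> w \in N -> w \notin M -> S \subset N.
    move=> N w Nm vN wN wM.
    case: (eqVneq N S) => [-> //| NneS].
    have Um : is_module e S (N :|: M).
      by apply: module_union => //; apply/set0Pn; exists v; rewrite inE vN vM.
    case: (boolP (S \subset N :|: M)) => SU.
      by move: (cover_disc e_sym Nm Mm NneS MneS SU); rewrite conn1 conn2.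
    have UneS : N :|: M != S by apply: contraNneq SU => ->.
    have := Mmax (N :|: M); rewrite Um UneS subsetUr /= => /eqP UM.
    by move: wM; rewrite -UM inE wN.
  split=> //.
  - move=> N w Nm vN wN _ wM; exact: subset_trans MS (strong N w Nm vN wN wM).
  move=> w z wS wM zS zM; exists S; split=> //; first exact: module_self.
  move=> N Nm vN wN _; exact: subsetP (strong N w Nm vN wN wM) z zS.
split=> //.
- exact: module_self.
- by move=> N w _ _ _ ->.
by move=> w z ->.
Qed.

Variable v : T.
Local Notation D i := (Dseq e v i).
Local Notation L j := (Dseq e v j :\: Dseq e v j.+1).

Lemma vD i : v \in D i.
Proof. elim: i => [|i IH]; first by rewrite inE. by case: (Dfun_good IH). Qed.

Lemma Dg i : good e (D i) (D i.+1) v.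
Proof. exact: (Dfun_good (vD i)). Qed.

Lemma Dmod i : is_module e setT (D i).
Proof.
elim: i => [|i IH]; first by apply: module_self; apply/set0Pn; exists v.
by case: (Dg i) => Hm _ _ _ _; apply: module_lift IH Hm.
Qed.

Lemma Dsub i : D i.+1 \subset D i.
Proof. by case: (Dg i). Qed.

Lemma Ddec j k : j <= k -> D k \subset D j.
Proof.
elim: k => [|k IH] jk; first by move: jk; rewrite leqn0 => /eqP ->.
rewrite leq_eqVlt in jk; case/orP: jk => [/eqP -> //| jk].
exact: subset_trans (Dsub k) (IH jk).
Qed.

Lemma Mvw_sub (A : {set T}) z : is_module e setT A -> v \in A -> z \in A -> Mvw e v z \subset A.
Proof. by move=> Am vA zA; apply: (bigcap_inf A); rewrite Am vA zA. Qed.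

Lemma sub_Mvw (A : {set T}) z : (forall N, is_module e setT N -> v \in N -> z \in N -> A \subset N) ->
  A \subset Mvw e v z.
Proof. by move=> H; apply/bigcapsP => N /andP [/andP [Nm vN] zN]; apply: H. Qed.

Lemma in_Mvw z : z \in Mvw e v z.
Proof. by rewrite -sub1set; apply: sub_Mvw => N _ _ zN; rewrite sub1set. Qed.

Lemma restr_mod (N : {set T}) i : is_module e setT N -> v \in N -> is_module e (D i) (N :&: D i).
Proof.
move=> Nm vN; apply: module_restr Nm _ _; first exact: subsetT.
by apply/set0Pn; exists v; rewrite inE vN vD.
Qed.

Lemma levA z j : z \in L j -> D j.+1 \proper Mvw e v z /\ Mvw e v z \subset D j.
Proof.
rewrite inE => /andP [zn zD]; split; last exact: Mvw_sub (Dmod j) (vD j) zD.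
apply/properP; split; last by exists z; [exact: in_Mvw|].
apply: sub_Mvw => N Nm vN zN; case: (Dg j) => _ _ _ S2 _.
have vN' : v \in N :&: D j by rewrite inE vN vD.
have zN' : z \in N :&: D j by rewrite inE zN zD.
have h := S2 (N :&: D j) z (restr_mod j Nm vN) vN' zN' zD zn.
exact: subset_trans h (subsetIl _ _).
Qed.

Lemma levB w z j : w \in L j -> z \in L j -> ~~ (Mvw e v w \proper Mvw e v z).
Proof.
move=> wL zL; apply/negP => pr; move: wL zL; rewrite !inE => /andP [wn wD] /andP [zn zD].
case: (Dg j) => _ _ _ _ S3; have [K [Km vK zK KH]] := S3 w z wD wn zD zn.
have KG : is_module e setT K := module_lift (Dmod j) Km.
have wK : w \in K.
  apply: (subsetP (Mvw_sub KG vK zK)); apply: (subsetP (proper_sub pr)); exact: in_Mvw.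
have : Mvw e v z \subset Mvw e v w.
  apply: sub_Mvw => N Nm vN wN; refine (Mvw_sub Nm vN _).
  have vN' : v \in N :&: D j by rewrite inE vN vD.
  have wN' : w \in N :&: D j by rewrite inE wN wD.
  have := KH (N :&: D j) (restr_mod j Nm vN) vN' wN' wK.
  by rewrite inE => /andP [].
by move: pr; rewrite properE => /andP [_ /negP].
Qed.

Lemma O1 y z j : z \in L j -> y \in D j.+1 -> Mvw e v y \proper Mvw e v z.
Proof. move=> zL yD; exact: sub_proper_trans (Mvw_sub (Dmod j.+1) (vD _) yD) (levA zL).1. Qed.

Lemma O2 y z k j : y \in L k -> z \in L j -> k < j -> Mvw e v z \proper Mvw e v y.
Proof.
move=> yL zL kj; exact: sub_proper_trans (subset_trans (levA zL).2 (Ddec kj)) (levA yL).1.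
Qed.

Lemma Tri y m : (exists2 k, k < m & y \in L k) \/ y \in D m.
Proof.
elim: m => [|m [[k km yk]|yD]]; first by right; rewrite inE.
  by left; exists k => //; apply: ltnW.
case: (boolP (y \in D m.+1)) => yD'; first by right.
by left; exists m => //; rewrite inE yD' yD.
Qed.

Lemma levU y j k : y \in L j -> y \in L k -> j = k.
Proof.
have H : forall a b, a < b -> y \in L a -> y \in L b -> False.
  move=> a b ab; rewrite !inE => /andP [ya _] /andP [_ yb].
  by move: ya; rewrite (subsetP (Ddec ab) _ yb).
move=> yj yk; case: (ltngtP j k) => // jk; [case: (H _ _ jk yj yk)|case: (H _ _ jk yk yj)].
Qed.

Lemma vclass_lev z j : z \in L j -> vclass e v z = L j.
Proof.
move=> zL; apply/setP => y; rewrite [in LHS]inE /precv.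
case: (boolP (y \in L j)) => yL.
  by rewrite (negbTE (levB zL yL)) (negbTE (levB yL zL)).
case: (Tri y j.+1) => [[k kj yk]|yD].
  have kj' : k < j.
    by rewrite ltn_neqAle -ltnS kj andbT; apply: contraNneq yL => <-.
  by rewrite (O2 yk zL kj').
by rewrite (O1 zL yD) andbF.
Qed.

Lemma Zchar w i z : w \in L i -> precv e v z w <-> exists2 k, k < i & z \in L k.
Proof.
move=> wL; rewrite /precv; split => [pr|[k ki zk]]; last exact: O2 zk wL ki.
case: (Tri z i) => // zD.
case: (boolP (z \in D i.+1)) => zD'.
  by move: pr; rewrite properE (proper_sub (O1 wL zD')) andbF.
have zL : z \in L i by rewrite inE zD' zD.
by move: pr; rewrite (negbTE (levB wL zL)).
Qed.

Lemma stable j : D j.+1 = D j -> forall k, j <= k -> D k = D j.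
Proof.
move=> Hj; elim=> [|k IH] jk; first by move: jk; rewrite leqn0 => /eqP ->.
rewrite leq_eqVlt in jk; case/orP: jk => [/eqP -> //| jk].
have -> : D k.+1 = Dfun e (D k) v by [].
by rewrite IH.
Qed.

Lemma nonempty w i j : w \in L i -> j < i -> exists z, z \in L j.
Proof.
move=> wL ji; suff : L j != set0 by move=> /set0Pn [z zL]; exists z.
apply/negP => /eqP L0.
have sub : D j \subset D j.+1.
  apply/subsetP => y yD; apply/negPn/negP => yn.
  have : y \in L j by rewrite inE yn yD.
  by rewrite L0 inE.
have Hj : D j.+1 = D j by apply/eqP; rewrite eqEsubset sub Dsub.
move: wL; rewrite inE (stable Hj (ltnW ji)) (stable Hj (leqW (ltnW ji))).
by rewrite andNb.
Qed.

End Main.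

Theorem lemma3p14 (T : finType) (e : rel T) (e_sym : symmetric e) (e_irr : irreflexive e)
  (i : nat) (v w : T) :
  i < #|T| ->
  w \in Dseq e v i :\: Dseq e v i.+1 ->
  pv e v w = i.
Proof.
move=> _ wL; rewrite /pv.
have -> : [set vclass e v z | z in [set z | precv e v z w]] =
          [set (Dseq e v j :\: Dseq e v j.+1) | j : 'I_i].
  apply/setP => X; apply/imsetP/imsetP.
    move=> [z]; rewrite inE => /(Zchar e_sym z wL) [k ki zk] ->.
    by exists (Ordinal ki) => //; rewrite (vclass_lev e_sym zk).
  move=> [j _ ->]; have [z zj] := nonempty e_sym wL (ltn_ord j).
  exists z; last by rewrite (vclass_lev e_sym zj).
  by rewrite inE; apply/(Zchar e_sym z wL); exists j.
rewrite card_imset ?cardsT ?card_ord //.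
move=> j1 j2 /= H; apply: val_inj => /=.
have [z zj] := nonempty e_sym wL (ltn_ord j1).
by apply: (levU e_sym zj); rewrite -H.
Qed.
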